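(* Let $n\geq 1$ with $n\neq 5$, and let $G$ be an $n$-vertex planar graph containing no subgraph isomorphic to $S_{2,2}$. Then $e(G)\leq 2n-2$.
   Context: All graphs are finite and simple; $e(G)$ denotes the number of edges of $G$. The double star $S_{2,2}$ is the tree obtained from an edge $xy$ by joining $x$ to two new vertices and $y$ to two further new vertices (6 vertices in total). *)

(* Defs.v *)
From Stdlib Require Import Reals.
From mathcomp Require Import all_boot.
Set Implicit Arguments. Unset Strict Implicit. Unset Printing Implicit Defensive.

Definition simple_graph (T : finType) (e : rel T) : Prop :=
  symmetric e /\ irreflexive e.

Definition edge_set (T : finType) (e : rel T) : {set {set T}} :=
  [set [set x; y] | x in T, y in T & e x y].

Definition num_edges (T : finType) (e : rel T) : nat := #|edge_set e|.

(* G contains a (not necessarily induced) subgraph isomorphic to S_{2,2}: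
   distinct vertices x,y,a,b,c,d with x~y, x~a, x~b, y~c, y~d. *)
Definition has_S22 (T : finType) (e : rel T) : Prop :=
  exists x y a b c d : T,
    uniq [:: x; y; a; b; c; d] /\
    e x y /\ e x a /\ e x b /\ e y c /\ e y d.

Definition cont01 (f : R -> R) : Prop :=
  forall t : R, (Rle 0 t /\ Rle t 1) ->
  forall eps : R, (Rlt 0 eps) -> exists delta : R, (Rlt 0 delta) /\
    forall s : R, (Rle 0 s /\ Rle s 1) -> (Rlt (Rabs (Rminus s t)) delta) ->
      (Rlt (Rabs (Rminus (f s) (f t))) eps).

Definition curve_cont (g : R -> R * R) : Prop :=
  cont01 (fun t => fst (g t)) /\ cont01 (fun t => snd (g t)).

(* Planarity: a drawing in the plane R^2 where vertices are distinct points,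
   each edge xy is a Jordan arc (continuous, injective on [0,1]) from the
   point of x to the point of y whose interior avoids all vertex points, and
   interiors of arcs of distinct edges are disjoint.  (An arc is given for
   each ordered adjacent pair; arcs for the same unordered edge are not
   constrained against each other.) *)
Definition planar (T : finType) (e : rel T) : Prop :=
  exists (pos : T -> R * R) (arc : T -> T -> R -> R * R),
    injective pos /\
    (forall x y, e x y ->
       curve_cont (arc x y) /\
       arc x y R0 = pos x /\ arc x y R1 = pos y /\
       (forall s t : R, (Rle 0 s /\ Rle s 1) -> (Rle 0 t /\ Rle t 1) ->
          arc x y s = arc x y t -> s = t) /\
       (forall (t : R) (z : T), (Rlt 0 t /\ Rlt t 1) -> arc x y t <> pos z)) /\
    (forall x y x' y', e x y -> e x' y' -> [set x; y] != [set x'; y'] ->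
       forall s t : R, (Rlt 0 s /\ Rlt s 1) -> (Rlt 0 t /\ Rlt t 1) ->
         arc x y s <> arc x' y' t).

(* Main.v *)
Require Import Defs.
From Stdlib Require Import Reals.
From mathcomp Require Import all_boot.
From Stdlib Require Import Lra Lia ZArith ClassicalEpsilon Classical.
From mathcomp Require Import zify.

Section Topo.
Local Open Scope R_scope.

Definition clamp (x : R) : R := Rmax 0 (Rmin 1 x).

Lemma clamp_in x : 0 <= clamp x /\ clamp x <= 1.
Proof. unfold clamp, Rmax, Rmin; repeat destruct Rle_dec; lra. Qed.

Lemma clamp_id x : 0 <= x <= 1 -> clamp x = x.
Proof. intros; unfold clamp, Rmax, Rmin; repeat destruct Rle_dec; lra. Qed.

Lemma clamp_lip x y : 0 <= x <= 1 -> Rabs (clamp y - x) <= Rabs (y - x).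
Proof.
  intros H; unfold clamp, Rmax, Rmin; repeat destruct Rle_dec;
  unfold Rabs; repeat destruct Rcase_abs; lra.
Qed.

Lemma cont01_pt f x : cont01 f -> 0 <= x <= 1 ->
  continuity_pt (fun y => f (clamp y)) x.
Proof.
  intros Hf Hx eps Heps.
  destruct (Hf x (conj (proj1 Hx) (proj2 Hx)) eps Heps) as [d [Hd Hd']].
  exists d; split; [exact Hd|].
  intros y [_ Hy]. simpl in *. unfold R_dist in *.
  rewrite (clamp_id x Hx).
  apply Hd'. apply clamp_in.
  eapply Rle_lt_trans; [apply clamp_lip; exact Hx| exact Hy].
Qed.

Lemma cont01_unif f : cont01 f -> forall eps, 0 < eps -> exists d, 0 < d /\
  forall s t, 0 <= s <= 1 -> 0 <= t <= 1 -> Rabs (s - t) < d -> Rabs (f s - f t) < eps.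
Proof.
  intros Hf eps Heps.
  assert (H := Heine (fun y => f (clamp y)) (fun c => 0 <= c <= 1) (compact_P3 0 1)
    (fun x Hx => cont01_pt f x Hf Hx)).
  destruct (H (mkposreal eps Heps)) as [d Hd].
  exists d; split; [apply cond_pos|].
  intros s t Hs Ht Hst. specialize (Hd s t Hs Ht Hst). simpl in Hd.
  rewrite !clamp_id in Hd; auto.
Qed.

Lemma cont01_min f : cont01 f -> exists x, (0 <= x <= 1) /\
  forall y, 0 <= y <= 1 -> f x <= f y.
Proof.
  intros Hf.
  destruct (continuity_ab_min (fun y => f (clamp y)) 0 1 ltac:(lra)
     (fun c Hc => cont01_pt f c Hf Hc)) as [x [Hx1 Hx2]].
  exists x; split; [exact Hx2|]. intros y Hy. specialize (Hx1 y Hy).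
  rewrite !clamp_id in Hx1; auto.
Qed.

Lemma cont01_lip f g1 g2 : cont01 g1 -> cont01 g2 ->
  (forall x y, 0 <= x <= 1 -> 0 <= y <= 1 ->
     Rabs (f x - f y) <= Rabs (g1 x - g1 y) + Rabs (g2 x - g2 y)) -> cont01 f.
Proof.
  intros H1 H2 H t Ht eps Heps.
  destruct (H1 t Ht (eps/2) ltac:(lra)) as [d1 [Hd1 Hd1']].
  destruct (H2 t Ht (eps/2) ltac:(lra)) as [d2 [Hd2 Hd2']].
  exists (Rmin d1 d2); split; [apply Rmin_pos; auto|].
  intros s Hs Hst.
  assert (A1 := Hd1' s Hs (Rlt_le_trans _ _ _ Hst (Rmin_l _ _))).
  assert (A2 := Hd2' s Hs (Rlt_le_trans _ _ _ Hst (Rmin_r _ _))).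
  specialize (H s t Hs Ht). lra.
Qed.

End Topo.

Section Q.
Local Open Scope R_scope.

Definition vsub (u v : R * R) : R * R := (fst u - fst v, snd u - snd v).
Definition n1 (u : R * R) : R := Rabs (fst u) + Rabs (snd u).

Definition qd (u : R * R) : Z :=
  match Rlt_dec 0 (fst u) with
  | left _ => match Rle_dec 0 (snd u) with left _ => 0%Z | right _ => 3%Z end
  | right _ => match Rlt_dec 0 (snd u) with left _ => 1%Z | right _ =>
      match Rlt_dec (fst u) 0 with left _ => 2%Z | right _ => 3%Z end end
  end.

Lemma qd_range u : (0 <= qd u <= 3)%Z.
Proof. unfold qd; repeat destruct Rlt_dec; repeat destruct Rle_dec; lia. Qed.

Lemma qd_neg u v : u <> v -> qd (vsub v u) = ((qd (vsub u v) + 2) mod 4)%Z.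
Proof.
  destruct u as [a b], v as [c d]; intros Hne; unfold qd, vsub; simpl.
  assert (H : a - c <> 0 \/ b - d <> 0).
  { destruct (Req_dec (a - c) 0); destruct (Req_dec (b - d) 0); auto.
    exfalso; apply Hne; f_equal; lra. }
  repeat destruct Rlt_dec; repeat destruct Rle_dec; simpl; try reflexivity;
  exfalso; lra.
Qed.

Lemma qd_notopp u v : n1 (vsub v u) < n1 u -> ((qd v - qd u) mod 4 <> 2)%Z.
Proof.
  destruct u as [a b], v as [c d]; unfold n1, qd, vsub; simpl; intros H.
  repeat destruct Rlt_dec; repeat destruct Rle_dec; simpl; try discriminate;
  revert H; unfold Rabs; repeat destruct Rcase_abs; lra.
Qed.

Lemma n1_pos u : n1 u >= 0.
Proof. unfold n1; pose proof (Rabs_pos (fst u)); pose proof (Rabs_pos (snd u)); lra. Qed.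

End Q.

Section DQ.
Local Open Scope Z_scope.

Definition dq (a b : Z) : Z :=
  let d := (b - a) mod 4 in if Z.eq_dec d 3 then -1 else d.

Lemma dq_mod a b : exists k, dq a b = b - a + 4 * k.
Proof.
  unfold dq; cbv zeta. pose proof (Z.mod_pos_bound (b - a) 4 ltac:(lia)).
  pose proof (Z.div_mod (b - a) 4 ltac:(lia)).
  destruct Z.eq_dec; cbn [is_left].
  - exists (- ((b - a) / 4) - 1)%Z. lia.
  - exists (- ((b - a) / 4)). lia.
Qed.

Lemma dq_anti a b : (b - a) mod 4 <> 2 -> dq b a = - dq a b.
Proof.
  unfold dq; cbv zeta; intros H.
  pose proof (Z.mod_pos_bound (b - a) 4 ltac:(lia)).
  pose proof (Z.div_mod (b - a) 4 ltac:(lia)).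
  pose proof (Z.mod_pos_bound (a - b) 4 ltac:(lia)).
  pose proof (Z.div_mod (a - b) 4 ltac:(lia)).
  repeat destruct Z.eq_dec; cbn [is_left]; lia.
Qed.

Lemma dq_shift a b : dq ((a + 2) mod 4) ((b + 2) mod 4) = dq a b.
Proof.
  unfold dq.
  replace (((b + 2) mod 4 - (a + 2) mod 4) mod 4) with ((b - a) mod 4); [reflexivity|].
  rewrite -Zminus_mod. f_equal. lia.
Qed.

Lemma cell_lemma a b c d :
  0 <= a <= 3 -> 0 <= b <= 3 -> 0 <= c <= 3 -> 0 <= d <= 3 ->
  (b - a) mod 4 <> 2 -> (c - b) mod 4 <> 2 -> (d - c) mod 4 <> 2 ->
  (a - d) mod 4 <> 2 -> (c - a) mod 4 <> 2 -> (d - b) mod 4 <> 2 ->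
  dq a b + dq b c + dq c d + dq d a = 0.
Proof.
  intros Ha Hb Hc Hd.
  assert (Ea : a = 0 \/ a = 1 \/ a = 2 \/ a = 3) by lia.
  assert (Eb : b = 0 \/ b = 1 \/ b = 2 \/ b = 3) by lia.
  assert (Ec : c = 0 \/ c = 1 \/ c = 2 \/ c = 3) by lia.
  assert (Ed : d = 0 \/ d = 1 \/ d = 2 \/ d = 3) by lia.
  case: Ea => [->|[->|[->|->]]]; case: Eb => [->|[->|[->|->]]];
  case: Ec => [->|[->|[->|->]]]; case: Ed => [->|[->|[->|->]]];
  intros; vm_compute in *; first [reflexivity | congruence].
Qed.

Fixpoint sumZ (f : nat -> Z) (n : nat) : Z :=
  match n with O => 0 | S n => sumZ f n + f n end.

Lemma sumZ_ext f g n : (forall k, (k < n)%coq_nat -> f k = g k) -> sumZ f n = sumZ g n.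
Proof. induction n; simpl; intros H; auto. rewrite IHn; [rewrite H|]; auto; intros; apply H; lia. Qed.

Lemma sumZ_sub f g n : sumZ (fun k => f k - g k) n = sumZ f n - sumZ g n.
Proof. induction n; simpl; auto; lia. Qed.

Lemma sumZ_tele a n : sumZ (fun k => a k - a (S k)) n = a O - a n.
Proof. induction n; simpl; lia. Qed.

Lemma sumZ_dq_mod a n : exists k, sumZ (fun i => dq (a i) (a (S i))) n = a n - a O + 4 * k.
Proof.
  induction n; cbn [sumZ]. exists 0; lia.
  destruct IHn as [k Hk]. destruct (dq_mod (a n) (a (S n))) as [k' Hk'].
  exists (k + k'); lia.
Qed.

Lemma grid_lemma (G : nat -> nat -> Z) N :
  (forall i j, (i < N)%coq_nat -> (j < N)%coq_nat ->
    dq (G i j) (G (S i) j) - dq (G i (S j)) (G (S i) (S j)) =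
    dq (G i j) (G i (S j)) - dq (G (S i) j) (G (S i) (S j))) ->
  sumZ (fun i => dq (G i O) (G (S i) O)) N - sumZ (fun i => dq (G i N) (G (S i) N)) N =
  sumZ (fun j => dq (G O j) (G O (S j))) N - sumZ (fun j => dq (G N j) (G N (S j))) N.
Proof.
  intros HC.
  set (H := fun j => sumZ (fun i => dq (G i j) (G (S i) j)) N).
  change (H O - H N = sumZ (fun j => dq (G O j) (G O (S j))) N -
                      sumZ (fun j => dq (G N j) (G N (S j))) N).
  rewrite <- sumZ_tele, <- sumZ_sub.
  apply sumZ_ext; intros j Hj. unfold H.
  rewrite <- sumZ_sub.
  rewrite (sumZ_ext _ (fun i => dq (G i j) (G i (S j)) - dq (G (S i) j) (G (S i) (S j)))).
  - apply (sumZ_tele (fun i => dq (G i j) (G i (S j)))).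
  - intros i Hi; apply HC; auto.
Qed.

End DQ.

Section Sq.
Local Open Scope R_scope.

Lemma abs_tri x y z : Rabs (x - z) <= Rabs (x - y) + Rabs (y - z).
Proof. unfold Rabs; repeat destruct Rcase_abs; lra. Qed.

Lemma n1_zero u v : n1 (vsub u v) = 0 -> u = v.
Proof.
  destruct u as [a b], v as [c d]; unfold n1, vsub; simpl; intros H.
  pose proof (Rabs_pos (a - c)); pose proof (Rabs_pos (b - d)).
  assert (E1 : Rabs (a - c) = 0) by lra. assert (E2 : Rabs (b - d) = 0) by lra.
  revert E1 E2; unfold Rabs; repeat destruct Rcase_abs; intros; f_equal; lra.
Qed.

Definition Phi (N : nat) (sg : R -> R * R) (p : R * R) : Z :=
  sumZ (fun k => dq (qd (vsub (sg (INR k / INR N)) p))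
                    (qd (vsub (sg (INR (S k) / INR N)) p))) N.

Lemma Phi_mod N sg p : (0 < N)%coq_nat -> exists k,
  Phi N sg p = (qd (vsub (sg R1) p) - qd (vsub (sg R0) p) + 4 * k)%Z.
Proof.
  intros HN. unfold Phi.
  destruct (sumZ_dq_mod (fun k => qd (vsub (sg (INR k / INR N)) p)) N) as [k Hk].
  exists k. rewrite Hk.
  replace (INR N / INR N) with 1; [|field; apply not_0_INR; lia].
  replace (INR 0 / INR N) with 0; [reflexivity|simpl; field; apply not_0_INR; lia].
Qed.

Section Square.
Variables sg tau : R -> R * R.
Hypothesis Hs : curve_cont sg.
Hypothesis Ht : curve_cont tau.
Hypothesis Hd : forall s t, 0 <= s <= 1 -> 0 <= t <= 1 -> sg s <> tau t.

Let w s t := vsub (sg s) (tau t).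

Lemma w_cont_t s : cont01 (fun t => n1 (w s t)).
Proof.
  destruct Ht as [Ht1 Ht2].
  apply (cont01_lip _ (fun t => fst (tau t)) (fun t => snd (tau t)) Ht1 Ht2).
  intros x y _ _. unfold w, n1, vsub; simpl.
  pose proof (abs_tri (fst (sg s) - fst (tau x)) (fst (sg s) - fst (tau y)) 0).
  pose proof (abs_tri (fst (sg s) - fst (tau y)) (fst (sg s) - fst (tau x)) 0).
  pose proof (abs_tri (snd (sg s) - snd (tau x)) (snd (sg s) - snd (tau y)) 0).
  pose proof (abs_tri (snd (sg s) - snd (tau y)) (snd (sg s) - snd (tau x)) 0).
  rewrite !Rminus_0_r in H H0 H1 H2.
  replace (fst (sg s) - fst (tau x) - (fst (sg s) - fst (tau y))) with (-(fst (tau x) - fst (tau y))) in H by ring.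
  replace (fst (sg s) - fst (tau y) - (fst (sg s) - fst (tau x))) with ((fst (tau x) - fst (tau y))) in H0 by ring.
  replace (snd (sg s) - snd (tau x) - (snd (sg s) - snd (tau y))) with (-(snd (tau x) - snd (tau y))) in H1 by ring.
  replace (snd (sg s) - snd (tau y) - (snd (sg s) - snd (tau x))) with ((snd (tau x) - snd (tau y))) in H2 by ring.
  rewrite Rabs_Ropp in H; rewrite Rabs_Ropp in H1.
  apply Rabs_le; split; lra.
Qed.

Let tm (s : R) : R := proj1_sig (constructive_indefinite_description _ (cont01_min _ (w_cont_t s))).

Lemma tm_spec s : (0 <= tm s <= 1) /\ forall t, 0 <= t <= 1 -> n1 (w s (tm s)) <= n1 (w s t).
Proof. unfold tm; destruct constructive_indefinite_description; simpl; auto. Qed.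

Lemma w_lip_s s s' t : n1 (w s t) <= n1 (w s' t) + (Rabs (fst (sg s) - fst (sg s')) + Rabs (snd (sg s) - snd (sg s'))).
Proof.
  unfold w, n1, vsub; simpl.
  pose proof (abs_tri (fst (sg s) - fst (tau t)) (fst (sg s') - fst (tau t)) 0).
  pose proof (abs_tri (snd (sg s) - snd (tau t)) (snd (sg s') - snd (tau t)) 0).
  rewrite !Rminus_0_r in H H0.
  replace (fst (sg s) - fst (tau t) - (fst (sg s') - fst (tau t))) with (fst (sg s) - fst (sg s')) in H by ring.
  replace (snd (sg s) - snd (tau t) - (snd (sg s') - snd (tau t))) with (snd (sg s) - snd (sg s')) in H0 by ring.
  lra.
Qed.

Lemma dist_pos : exists m, 0 < m /\ forall s t, 0 <= s <= 1 -> 0 <= t <= 1 -> m <= n1 (w s t).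
Proof.
  set (H := fun s => n1 (w s (tm s))).
  assert (HC : cont01 H).
  { destruct Hs as [Hs1 Hs2].
    apply (cont01_lip _ _ _ Hs1 Hs2). intros x y Hx Hy. unfold H.
    destruct (tm_spec x) as [Ix Mx]; destruct (tm_spec y) as [Iy My].
    pose proof (Mx (tm y) Iy). pose proof (My (tm x) Ix).
    pose proof (w_lip_s x y (tm y)). pose proof (w_lip_s y x (tm x)).
    rewrite (Rabs_minus_sym (fst (sg y))) (Rabs_minus_sym (snd (sg y))) in H3.
    apply Rabs_le; split; lra. }
  destruct (cont01_min _ HC) as [s0 [Is0 Ms0]].
  exists (H s0); split.
  - destruct (tm_spec s0) as [I _]. unfold H.
    destruct (Rle_lt_or_eq _ _ (Rge_le _ _ (n1_pos (w s0 (tm s0))))) as [Hlt|Heq]; auto.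
    exfalso. apply (Hd s0 (tm s0) Is0 I). apply n1_zero. unfold w in Heq. auto.
  - intros s t Is It. eapply Rle_trans; [apply Ms0; exact Is|].
    unfold H. apply (proj2 (tm_spec s)); exact It.
Qed.

Lemma unif4 eps : 0 < eps -> exists d, 0 < d /\ forall s s', 0 <= s <= 1 -> 0 <= s' <= 1 ->
  Rabs (s - s') < d ->
  Rabs (fst (sg s) - fst (sg s')) < eps /\ Rabs (snd (sg s) - snd (sg s')) < eps /\
  Rabs (fst (tau s) - fst (tau s')) < eps /\ Rabs (snd (tau s) - snd (tau s')) < eps.
Proof.
  intros He. destruct Hs as [Hs1 Hs2]; destruct Ht as [Ht1 Ht2].
  destruct (cont01_unif _ Hs1 eps He) as [d1 [P1 D1]].
  destruct (cont01_unif _ Hs2 eps He) as [d2 [P2 D2]].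
  destruct (cont01_unif _ Ht1 eps He) as [d3 [P3 D3]].
  destruct (cont01_unif _ Ht2 eps He) as [d4 [P4 D4]].
  exists (Rmin (Rmin d1 d2) (Rmin d3 d4)); split.
  { repeat apply Rmin_pos; auto. }
  intros s s' Is Is' Hss.
  pose proof (Rmin_l (Rmin d1 d2) (Rmin d3 d4)); pose proof (Rmin_r (Rmin d1 d2) (Rmin d3 d4)).
  pose proof (Rmin_l d1 d2); pose proof (Rmin_r d1 d2); pose proof (Rmin_l d3 d4); pose proof (Rmin_r d3 d4).
  repeat split; [apply D1|apply D2|apply D3|apply D4]; auto; lra.
Qed.

Lemma near_ok m d s t s' t' :
  (forall s t, 0 <= s <= 1 -> 0 <= t <= 1 -> m <= n1 (w s t)) ->
  (forall s s', 0 <= s <= 1 -> 0 <= s' <= 1 -> Rabs (s - s') < d ->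
     Rabs (fst (sg s) - fst (sg s')) < m/4 /\ Rabs (snd (sg s) - snd (sg s')) < m/4 /\
     Rabs (fst (tau s) - fst (tau s')) < m/4 /\ Rabs (snd (tau s) - snd (tau s')) < m/4) ->
  0 <= s <= 1 -> 0 <= t <= 1 -> 0 <= s' <= 1 -> 0 <= t' <= 1 ->
  Rabs (s - s') < d -> Rabs (t - t') < d ->
  ((qd (w s' t') - qd (w s t)) mod 4 <> 2)%Z.
Proof.
  intros Hm Hu Is It Is' It' Hss Htt.
  apply qd_notopp.
  destruct (Hu s' s Is' Is) as [A1 [A2 _]]. { rewrite Rabs_minus_sym; exact Hss. }
  destruct (Hu t' t It' It) as [_ [_ [A3 A4]]]. { rewrite Rabs_minus_sym; exact Htt. }
  pose proof (Hm s t Is It).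
  unfold w, n1, vsub in *; simpl in *.
  replace (fst (sg s') - fst (tau t') - (fst (sg s) - fst (tau t))) with
    ((fst (sg s') - fst (sg s)) - (fst (tau t') - fst (tau t))) by ring.
  replace (snd (sg s') - snd (tau t') - (snd (sg s) - snd (tau t))) with
    ((snd (sg s') - snd (sg s)) - (snd (tau t') - snd (tau t))) by ring.
  pose proof (abs_tri (fst (sg s') - fst (sg s)) 0 (fst (tau t') - fst (tau t))).
  pose proof (abs_tri (snd (sg s') - snd (sg s)) 0 (snd (tau t') - snd (tau t))).
  rewrite !Rminus_0_r !Rminus_0_l !Rabs_Ropp in H0 H1.
  lra.
Qed.

Lemma pt_in N i : (0 < N)%coq_nat -> (i <= N)%coq_nat -> 0 <= INR i / INR N <= 1.
Proof.
  intros HN Hi. assert (0 < INR N) by (apply lt_0_INR; lia).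
  assert (INR i <= INR N) by (apply le_INR; lia).
  split.
  - apply Rmult_le_pos; [apply pos_INR| left; apply Rinv_0_lt_compat; auto].
  - apply (Rmult_le_reg_r (INR N)); auto. unfold Rdiv; rewrite Rmult_assoc Rinv_l; lra.
Qed.

Lemma pt_step N i d : (0 < N)%coq_nat -> 1 < INR N * d -> Rabs (INR i / INR N - INR (S i) / INR N) < d.
Proof.
  intros HN Hd'. assert (0 < INR N) by (apply lt_0_INR; lia).
  rewrite S_INR.
  replace (INR i / INR N - (INR i + 1) / INR N) with (- (1 / INR N)) by (field; lra).
  rewrite Rabs_Ropp Rabs_pos_eq.
  - apply (Rmult_lt_reg_r (INR N)); auto. unfold Rdiv; rewrite Rmult_assoc Rinv_l; lra.
  - left; apply Rdiv_lt_0_compat; lra.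
Qed.

Lemma square_lemma : exists N0, forall N, (N0 <= N)%coq_nat ->
  (Phi N sg (tau R0) - Phi N sg (tau R1) = Phi N tau (sg R0) - Phi N tau (sg R1))%Z.
Proof.
  destruct dist_pos as [m [Hm Hm']].
  destruct (unif4 (m/4) ltac:(lra)) as [d [Hd0 Hd']].
  destruct (INR_archimed d 1 Hd0) as [N0 HN0].
  exists (S N0). intros N HN.
  assert (HN' : (0 < N)%coq_nat) by lia.
  assert (HNd : 1 < INR N * d).
  { apply Rlt_le_trans with (INR N0 * d); [lra|].
    apply Rmult_le_compat_r; [lra| apply le_INR; lia]. }
  set (G := fun i j => qd (w (INR i / INR N) (INR j / INR N))).
  assert (NO : forall i j i' j', (i <= N)%coq_nat -> (j <= N)%coq_nat -> (i' <= N)%coq_nat -> (j' <= N)%coq_nat ->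
            (i' = i \/ i' = S i \/ i = S i') -> (j' = j \/ j' = S j \/ j = S j') ->
            ((G i' j' - G i j) mod 4 <> 2)%Z).
  { intros i j i' j' Hi Hj Hi' Hj' Ei Ej. unfold G.
    assert (D0 : Rabs (INR i/INR N - INR i/INR N) < d) by (rewrite Rminus_diag Rabs_R0; lra).
    assert (D0' : Rabs (INR j/INR N - INR j/INR N) < d) by (rewrite Rminus_diag Rabs_R0; lra).
    apply (near_ok m d); try apply pt_in; auto.
    - case: Ei => [->|[->|->]]; auto; [apply pt_step; auto|].
      rewrite Rabs_minus_sym; apply pt_step; auto.
    - case: Ej => [->|[->|->]]; auto; [apply pt_step; auto|].
      rewrite Rabs_minus_sym; apply pt_step; auto. }
  assert (HC : forall i j, (i < N)%coq_nat -> (j < N)%coq_nat ->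
    (dq (G i j) (G (S i) j) - dq (G i (S j)) (G (S i) (S j)) =
    dq (G i j) (G i (S j)) - dq (G (S i) j) (G (S i) (S j)))%Z).
  { intros i j Hi Hj.
    assert (Hc := cell_lemma (G i j) (G (S i) j) (G (S i) (S j)) (G i (S j))
      (qd_range _) (qd_range _) (qd_range _) (qd_range _)).
    rewrite (dq_anti (G i (S j)) (G (S i) (S j))) in Hc.
    rewrite (dq_anti (G i j) (G i (S j))) in Hc.
    - repeat (match type of Hc with ?A -> _ => let h := fresh in assert (h : A) by (apply NO; lia); specialize (Hc h) end).
      lia.
    - apply NO; lia.
    - apply NO; lia.
    }
  assert (Hg := grid_lemma G N HC).
  assert (E0 : INR 0 / INR N = 0) by (simpl; unfold Rdiv; ring).
  assert (E1 : INR N / INR N = 1) by (field; apply not_0_INR; lia).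
  unfold G, w in Hg. rewrite E0 E1 in Hg.
  unfold Phi.
  assert (NEG : forall t u, 0 <= t <= 1 -> 0 <= u <= 1 ->
     qd (vsub (sg u) (tau t)) = ((qd (vsub (tau t) (sg u)) + 2) mod 4)%Z).
  { intros t u It Iu. apply qd_neg. intros Heq; apply (Hd u t Iu It); auto. }
  rewrite (sumZ_ext (fun j => dq (qd (vsub (sg 0) (tau (INR j / INR N)))) (qd (vsub (sg 0) (tau (INR (S j) / INR N)))))
     (fun k => dq (qd (vsub (tau (INR k / INR N)) (sg 0))) (qd (vsub (tau (INR (S k) / INR N)) (sg 0))))) in Hg.
  rewrite (sumZ_ext (fun j => dq (qd (vsub (sg 1) (tau (INR j / INR N)))) (qd (vsub (sg 1) (tau (INR (S j) / INR N)))))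
     (fun k => dq (qd (vsub (tau (INR k / INR N)) (sg 1))) (qd (vsub (tau (INR (S k) / INR N)) (sg 1))))) in Hg.
  - exact Hg.
  - intros k Hk. rewrite !NEG; try apply pt_in; try lra; try lia. apply dq_shift.
  - intros k Hk. rewrite !NEG; try apply pt_in; try lra; try lia. apply dq_shift.
Qed.

End Square.
End Sq.

Lemma K5_alg (P : nat -> nat -> nat -> Z) (Q : nat -> nat -> Z) :
  (forall i j k, (i < j)%coq_nat -> (j < 5)%coq_nat -> (k < 5)%coq_nat -> k <> i -> k <> j ->
     exists n, P i j k = (Q j k - Q i k + 4 * n)%Z) ->
  (forall x y, (x < y)%coq_nat -> (y < 5)%coq_nat -> exists m, (Q x y - Q y x = 2 + 4 * m)%Z) ->
  (forall i j k l, (i < j)%coq_nat -> (j < 5)%coq_nat -> (k < l)%coq_nat -> (l < 5)%coq_nat ->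
     i <> k -> i <> l -> j <> k -> j <> l ->
     (P i j k - P i j l = P k l i - P k l j)%Z) -> False.
Proof.
  intros HP HQ HS.
  destruct (HP 0 1 2 ltac:(lia) ltac:(lia) ltac:(lia) ltac:(lia) ltac:(lia)) as [n0 E0].
  destruct (HP 0 1 3 ltac:(lia) ltac:(lia) ltac:(lia) ltac:(lia) ltac:(lia)) as [n1 E1].
  destruct (HP 0 1 4 ltac:(lia) ltac:(lia) ltac:(lia) ltac:(lia) ltac:(lia)) as [n2 E2].
  destruct (HP 0 2 1 ltac:(lia) ltac:(lia) ltac:(lia) ltac:(lia) ltac:(lia)) as [n3 E3].
  destruct (HP 0 2 3 ltac:(lia) ltac:(lia) ltac:(lia) ltac:(lia) ltac:(lia)) as [n4 E4].
  destruct (HP 0 2 4 ltac:(lia) ltac:(lia) ltac:(lia) ltac:(lia) ltac:(lia)) as [n5 E5].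
  destruct (HP 0 3 1 ltac:(lia) ltac:(lia) ltac:(lia) ltac:(lia) ltac:(lia)) as [n6 E6].
  destruct (HP 0 3 2 ltac:(lia) ltac:(lia) ltac:(lia) ltac:(lia) ltac:(lia)) as [n7 E7].
  destruct (HP 0 3 4 ltac:(lia) ltac:(lia) ltac:(lia) ltac:(lia) ltac:(lia)) as [n8 E8].
  destruct (HP 0 4 1 ltac:(lia) ltac:(lia) ltac:(lia) ltac:(lia) ltac:(lia)) as [n9 E9].
  destruct (HP 0 4 2 ltac:(lia) ltac:(lia) ltac:(lia) ltac:(lia) ltac:(lia)) as [n10 E10].
  destruct (HP 0 4 3 ltac:(lia) ltac:(lia) ltac:(lia) ltac:(lia) ltac:(lia)) as [n11 E11].
  destruct (HP 1 2 0 ltac:(lia) ltac:(lia) ltac:(lia) ltac:(lia) ltac:(lia)) as [n12 E12].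
  destruct (HP 1 2 3 ltac:(lia) ltac:(lia) ltac:(lia) ltac:(lia) ltac:(lia)) as [n13 E13].
  destruct (HP 1 2 4 ltac:(lia) ltac:(lia) ltac:(lia) ltac:(lia) ltac:(lia)) as [n14 E14].
  destruct (HP 1 3 0 ltac:(lia) ltac:(lia) ltac:(lia) ltac:(lia) ltac:(lia)) as [n15 E15].
  destruct (HP 1 3 2 ltac:(lia) ltac:(lia) ltac:(lia) ltac:(lia) ltac:(lia)) as [n16 E16].
  destruct (HP 1 3 4 ltac:(lia) ltac:(lia) ltac:(lia) ltac:(lia) ltac:(lia)) as [n17 E17].
  destruct (HP 1 4 0 ltac:(lia) ltac:(lia) ltac:(lia) ltac:(lia) ltac:(lia)) as [n18 E18].
  destruct (HP 1 4 2 ltac:(lia) ltac:(lia) ltac:(lia) ltac:(lia) ltac:(lia)) as [n19 E19].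
  destruct (HP 1 4 3 ltac:(lia) ltac:(lia) ltac:(lia) ltac:(lia) ltac:(lia)) as [n20 E20].
  destruct (HP 2 3 0 ltac:(lia) ltac:(lia) ltac:(lia) ltac:(lia) ltac:(lia)) as [n21 E21].
  destruct (HP 2 3 1 ltac:(lia) ltac:(lia) ltac:(lia) ltac:(lia) ltac:(lia)) as [n22 E22].
  destruct (HP 2 3 4 ltac:(lia) ltac:(lia) ltac:(lia) ltac:(lia) ltac:(lia)) as [n23 E23].
  destruct (HP 2 4 0 ltac:(lia) ltac:(lia) ltac:(lia) ltac:(lia) ltac:(lia)) as [n24 E24].
  destruct (HP 2 4 1 ltac:(lia) ltac:(lia) ltac:(lia) ltac:(lia) ltac:(lia)) as [n25 E25].
  destruct (HP 2 4 3 ltac:(lia) ltac:(lia) ltac:(lia) ltac:(lia) ltac:(lia)) as [n26 E26].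
  destruct (HP 3 4 0 ltac:(lia) ltac:(lia) ltac:(lia) ltac:(lia) ltac:(lia)) as [n27 E27].
  destruct (HP 3 4 1 ltac:(lia) ltac:(lia) ltac:(lia) ltac:(lia) ltac:(lia)) as [n28 E28].
  destruct (HP 3 4 2 ltac:(lia) ltac:(lia) ltac:(lia) ltac:(lia) ltac:(lia)) as [n29 E29].
  destruct (HQ 0 1 ltac:(lia) ltac:(lia)) as [n30 E30].
  destruct (HQ 0 2 ltac:(lia) ltac:(lia)) as [n31 E31].
  destruct (HQ 0 3 ltac:(lia) ltac:(lia)) as [n32 E32].
  destruct (HQ 0 4 ltac:(lia) ltac:(lia)) as [n33 E33].
  destruct (HQ 1 2 ltac:(lia) ltac:(lia)) as [n34 E34].
  destruct (HQ 1 3 ltac:(lia) ltac:(lia)) as [n35 E35].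
  destruct (HQ 1 4 ltac:(lia) ltac:(lia)) as [n36 E36].
  destruct (HQ 2 3 ltac:(lia) ltac:(lia)) as [n37 E37].
  destruct (HQ 2 4 ltac:(lia) ltac:(lia)) as [n38 E38].
  destruct (HQ 3 4 ltac:(lia) ltac:(lia)) as [n39 E39].
  pose proof (HS 0 1 2 3 ltac:(lia) ltac:(lia) ltac:(lia) ltac:(lia) ltac:(lia) ltac:(lia) ltac:(lia) ltac:(lia)).
  pose proof (HS 0 1 2 4 ltac:(lia) ltac:(lia) ltac:(lia) ltac:(lia) ltac:(lia) ltac:(lia) ltac:(lia) ltac:(lia)).
  pose proof (HS 0 1 3 4 ltac:(lia) ltac:(lia) ltac:(lia) ltac:(lia) ltac:(lia) ltac:(lia) ltac:(lia) ltac:(lia)).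
  pose proof (HS 0 2 1 3 ltac:(lia) ltac:(lia) ltac:(lia) ltac:(lia) ltac:(lia) ltac:(lia) ltac:(lia) ltac:(lia)).
  pose proof (HS 0 2 1 4 ltac:(lia) ltac:(lia) ltac:(lia) ltac:(lia) ltac:(lia) ltac:(lia) ltac:(lia) ltac:(lia)).
  pose proof (HS 0 2 3 4 ltac:(lia) ltac:(lia) ltac:(lia) ltac:(lia) ltac:(lia) ltac:(lia) ltac:(lia) ltac:(lia)).
  pose proof (HS 0 3 1 2 ltac:(lia) ltac:(lia) ltac:(lia) ltac:(lia) ltac:(lia) ltac:(lia) ltac:(lia) ltac:(lia)).
  pose proof (HS 0 3 1 4 ltac:(lia) ltac:(lia) ltac:(lia) ltac:(lia) ltac:(lia) ltac:(lia) ltac:(lia) ltac:(lia)).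
  pose proof (HS 0 3 2 4 ltac:(lia) ltac:(lia) ltac:(lia) ltac:(lia) ltac:(lia) ltac:(lia) ltac:(lia) ltac:(lia)).
  pose proof (HS 0 4 1 2 ltac:(lia) ltac:(lia) ltac:(lia) ltac:(lia) ltac:(lia) ltac:(lia) ltac:(lia) ltac:(lia)).
  pose proof (HS 0 4 1 3 ltac:(lia) ltac:(lia) ltac:(lia) ltac:(lia) ltac:(lia) ltac:(lia) ltac:(lia) ltac:(lia)).
  pose proof (HS 0 4 2 3 ltac:(lia) ltac:(lia) ltac:(lia) ltac:(lia) ltac:(lia) ltac:(lia) ltac:(lia) ltac:(lia)).
  pose proof (HS 1 2 3 4 ltac:(lia) ltac:(lia) ltac:(lia) ltac:(lia) ltac:(lia) ltac:(lia) ltac:(lia) ltac:(lia)).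
  pose proof (HS 1 3 2 4 ltac:(lia) ltac:(lia) ltac:(lia) ltac:(lia) ltac:(lia) ltac:(lia) ltac:(lia) ltac:(lia)).
  pose proof (HS 1 4 2 3 ltac:(lia) ltac:(lia) ltac:(lia) ltac:(lia) ltac:(lia) ltac:(lia) ltac:(lia) ltac:(lia)).
  lia.
Qed.

Lemma uniformN (P : nat -> nat -> Prop) n :
  (forall i, (i < n)%coq_nat -> exists N0, forall N, (N0 <= N)%coq_nat -> P i N) ->
  exists N0, forall N, (N0 <= N)%coq_nat -> forall i, (i < n)%coq_nat -> P i N.
Proof.
  induction n as [|n IH]; intros H.
  - exists O; intros; lia.
  - destruct IH as [N1 H1]. { intros i Hi; apply H; lia. }
    destruct (H n ltac:(lia)) as [N2 H2].
    exists (N1 + N2)%coq_nat. intros N HN i Hi.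
    destruct (Nat.eq_dec i n) as [->|Hne]. apply H2; lia. apply H1; lia.
Qed.

Section G.
Local Open Scope R_scope.
Variable T : finType.
Variable e : rel T.
Variable pos : T -> R * R.
Variable arc : T -> T -> R -> R * R.
Hypothesis Hinj : injective pos.
Hypothesis Harc : forall x y, e x y ->
       curve_cont (arc x y) /\
       arc x y R0 = pos x /\ arc x y R1 = pos y /\
       (forall s t : R, (Rle 0 s /\ Rle s 1) -> (Rle 0 t /\ Rle t 1) ->
          arc x y s = arc x y t -> s = t) /\
       (forall (t : R) (z : T), (Rlt 0 t /\ Rlt t 1) -> arc x y t <> pos z).
Hypothesis Hdisj : forall x y x' y', e x y -> e x' y' -> [set x; y] != [set x'; y'] ->
       forall s t : R, (Rlt 0 s /\ Rlt s 1) -> (Rlt 0 t /\ Rlt t 1) ->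
         arc x y s <> arc x' y' t.

Lemma arcs_disj x y x' y' : e x y -> e x' y' -> x <> x' -> x <> y' -> y <> x' -> y <> y' ->
  forall s t : R, (0 <= s <= 1) -> (0 <= t <= 1) -> arc x y s <> arc x' y' t.
Proof.
  intros E E' n1 n2 n3 n4 s t Is It.
  destruct (Harc x y E) as [_ [A0 [A1 [_ Av]]]].
  destruct (Harc x' y' E') as [_ [B0 [B1 [_ Bv]]]].
  assert (Cs : s = R0 \/ s = R1 \/ (0 < s < 1)) by lra.
  assert (Ct : t = R0 \/ t = R1 \/ (0 < t < 1)) by lra.
  destruct Cs as [->|[->|Cs]]; destruct Ct as [->|[->|Ct]];
    rewrite ?A0 ?A1 ?B0 ?B1; intros Heq;
    try (apply Hinj in Heq; congruence);
    try (eapply Bv; [exact Ct| symmetry; exact Heq]);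
    try (eapply Av; [exact Cs| exact Heq]).
  eapply Hdisj; [exact E| exact E'| | exact Cs | exact Ct | exact Heq].
  apply/negP => /eqP HS.
  have : x \in [set x'; y'] by rewrite -HS set21.
  rewrite in_set2 => /orP [/eqP|/eqP]; auto.
Qed.

Lemma no_K5_aux (s : seq T) : size s = 5%nat -> uniq s ->
  (forall x y, x \in s -> y \in s -> x <> y -> e x y) -> False.
Proof.
  intros Hsz Hu Hadj.
  destruct s as [|x0 s']; [discriminate|].
  set (v := fun n => nth x0 (x0 :: s') n).
  assert (Vd : forall i j, (i < 5)%coq_nat -> (j < 5)%coq_nat -> i <> j -> v i <> v j).
  { intros i j Hi Hj Hij Heq. apply Hij. apply/eqP.
    rewrite -(nth_uniq x0 (s := x0 :: s')) //; [apply/eqP; exact Heq| |];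
    rewrite Hsz; apply/ltP; lia. }
  assert (Va : forall i j, (i < 5)%coq_nat -> (j < 5)%coq_nat -> i <> j -> e (v i) (v j)).
  { intros i j Hi Hj Hij. apply Hadj; [apply mem_nth| apply mem_nth| apply Vd]; auto;
    rewrite Hsz; apply/ltP; lia. }
  set (A := fun i j => arc (v i) (v j)).
  assert (HN : exists N0, forall N, (N0 <= N)%coq_nat -> forall i, (i < 5)%coq_nat ->
     forall j, (j < 5)%coq_nat -> forall k, (k < 5)%coq_nat -> forall l, (l < 5)%coq_nat ->
     (i < j)%coq_nat -> (k < l)%coq_nat -> i <> k -> i <> l -> j <> k -> j <> l ->
     (Phi N (A i j) (A k l R0) - Phi N (A i j) (A k l R1) =
      Phi N (A k l) (A i j R0) - Phi N (A k l) (A i j R1))%Z).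
  { apply uniformN; intros i Hi.
    apply uniformN with (P := fun j N => forall k, (k < 5)%coq_nat -> forall l, (l < 5)%coq_nat ->
     (i < j)%coq_nat -> (k < l)%coq_nat -> i <> k -> i <> l -> j <> k -> j <> l ->
     (Phi N (A i j) (A k l R0) - Phi N (A i j) (A k l R1) =
      Phi N (A k l) (A i j R0) - Phi N (A k l) (A i j R1))%Z); intros j Hj.
    apply uniformN with (P := fun k N => forall l, (l < 5)%coq_nat ->
     (i < j)%coq_nat -> (k < l)%coq_nat -> i <> k -> i <> l -> j <> k -> j <> l ->
     (Phi N (A i j) (A k l R0) - Phi N (A i j) (A k l R1) =
      Phi N (A k l) (A i j R0) - Phi N (A k l) (A i j R1))%Z); intros k Hk.
    apply uniformN with (P := fun l N =>
     (i < j)%coq_nat -> (k < l)%coq_nat -> i <> k -> i <> l -> j <> k -> j <> l ->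
     (Phi N (A i j) (A k l R0) - Phi N (A i j) (A k l R1) =
      Phi N (A k l) (A i j R0) - Phi N (A k l) (A i j R1))%Z); intros l Hl.
    destruct (classic ((i < j)%coq_nat /\ (k < l)%coq_nat /\ i <> k /\ i <> l /\ j <> k /\ j <> l))
      as [[C1 [C2 [C3 [C4 [C5 C6]]]]]|C].
    - destruct (square_lemma (A i j) (A k l)) as [N0 HN0].
      + apply (Harc _ _ (Va i j Hi Hj ltac:(lia))).
      + apply (Harc _ _ (Va k l Hk Hl ltac:(lia))).
      + apply arcs_disj; try apply Va; try apply Vd; auto; lia.
      + exists N0; intros N HN _ _ _ _ _ _; apply HN0; auto.
    - exists O; intros N _ C1 C2 C3 C4 C5 C6; exfalso; apply C; tauto. }
  destruct HN as [N0 HN].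
  set (N := S N0).
  apply (K5_alg (fun i j k => Phi N (A i j) (pos (v k)))
                (fun x y => qd (vsub (pos (v x)) (pos (v y))))).
  - intros i j k Hij Hj Hk Hki Hkj.
    destruct (Phi_mod N (A i j) (pos (v k)) ltac:(unfold N; lia)) as [n Hn].
    exists n. rewrite Hn. unfold A.
    destruct (Harc _ _ (Va i j ltac:(lia) Hj ltac:(lia))) as [_ [A0 [A1 _]]].
    rewrite A0 A1. reflexivity.
  - intros x y Hxy Hy.
    rewrite (qd_neg (pos (v x)) (pos (v y))).
    2: { intros Heq. apply Hinj in Heq. apply (Vd x y); auto; lia. }
    pose proof (qd_range (vsub (pos (v x)) (pos (v y)))).
    set (z := qd (vsub (pos (v x)) (pos (v y)))) in *.
    pose proof (Z.mod_pos_bound (z + 2) 4 ltac:(lia)).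
    pose proof (Z.div_mod (z + 2) 4 ltac:(lia)).
    exists ((z + 2) / 4 - 1)%Z. lia.
  - intros i j k l Hij Hj Hkl Hl C3 C4 C5 C6.
    pose proof (HN N ltac:(unfold N; lia) i ltac:(lia) j Hj k ltac:(lia) l Hl Hij Hkl C3 C4 C5 C6) as H.
    destruct (Harc _ _ (Va i j ltac:(lia) Hj ltac:(lia))) as [_ [A0 [A1 _]]].
    destruct (Harc _ _ (Va k l ltac:(lia) Hl ltac:(lia))) as [_ [B0 [B1 _]]].
    unfold A in H. rewrite A0 A1 B0 B1 in H. exact H.
Qed.

End G.

Local Open Scope R_scope.
Lemma no_K5 (T : finType) (e : rel T) (s : seq T) : planar e -> size s = 5%nat -> uniq s ->
  (forall x y, x \in s -> y \in s -> x <> y -> e x y) -> False.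
Proof.
  intros [pos [arc [Hinj [Harc Hdisj]]]].
  eapply no_K5_aux; eauto.
Qed.

Local Close Scope R_scope.
Set Implicit Arguments. Unset Strict Implicit. Unset Printing Implicit Defensive.

Section Comb.
Variables (T : finType) (e : rel T).
Hypothesis Hsym : symmetric e.
Hypothesis Hirr : irreflexive e.
Hypothesis HS22 : ~ has_S22 e.
Hypothesis HK5 : forall s : seq T, size s = 5 -> uniq s ->
  (forall x y, x \in s -> y \in s -> x <> y -> e x y) -> False.

Definition ES (S : {set T}) := [set p in edge_set e | p \subset S].
Definition NS (S : {set T}) x := [set y in S | e x y].

Lemma edgeP p : p \in edge_set e -> exists x y, e x y /\ p = [set x; y].
Proof.
  rewrite /edge_set; case/imset2P => x y _ yin ->.
  exists x, y; split => //. move: yin. by rewrite inE.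
Qed.

Lemma edge_in x y : e x y -> [set x; y] \in edge_set e.
Proof. move=> Exy. rewrite /edge_set. apply/imset2P. exists x y => //. by rewrite inE. Qed.

Lemma neq_of_e x y : e x y -> x != y.
Proof. move=> Exy; apply/eqP => Hxy; subst; by rewrite Hirr in Exy. Qed.

Lemma S22_of x y a b c d : e x y -> e x a -> e x b -> e y c -> e y d ->
  uniq [:: x; y; a; b; c; d] -> False.
Proof. move=> *. apply HS22. exists x, y, a, b, c, d. by repeat split. Qed.

Lemma cardD1_ge (A : {set T}) u : #|A| <= (#|A :\ u|).+1.
Proof. rewrite (cardsD1 u A). by case: (u \in A). Qed.

Lemma NS_sub (S : {set T}) v : NS S v \subset S :\ v.
Proof.
  apply/subsetP => y. rewrite !inE => /andP [yS Evy]. rewrite yS andbT.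
  rewrite eq_sym. exact: neq_of_e.
Qed.

Lemma ES_del (S : {set T}) v : #|ES S| <= #|ES (S :\ v)| + #|NS S v|.
Proof.
  have Hsub : ES S \subset ES (S :\ v) :|: [set [set v; y] | y in NS S v].
  { apply/subsetP => p. rewrite !inE => /andP [pE pS].
    have [x [y [Exy Hp]]] := edgeP pE. subst p.
    have xS : x \in S by apply: (subsetP pS); rewrite !inE eqxx.
    have yS : y \in S by apply: (subsetP pS); rewrite !inE eqxx orbT.
    case: (eqVneq x v) => [Hxv|Hxv].
    { subst x. apply/orP; right. apply/imsetP. exists y => //. by rewrite inE yS Exy. }
    case: (eqVneq y v) => [Hyv|Hyv].
    { subst y. apply/orP; right. apply/imsetP. exists x.
      - by rewrite inE xS Hsym.
      - by rewrite setUC. }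
    apply/orP; left. rewrite pE /=. apply/subsetP => z. rewrite !inE.
    case/orP => /eqP ->; [by rewrite Hxv xS | by rewrite Hyv yS]. }
  apply: (leq_trans (subset_leq_card Hsub)).
  apply: (leq_trans (leq_card_setU _ _)). rewrite leq_add2l. exact: leq_imset_card.
Qed.

Lemma ES_empty (S : {set T}) : #|S| = 0 -> #|ES S| = 0.
Proof.
  move=> /eqP; rewrite cards_eq0 => /eqP ->. apply/eqP; rewrite cards_eq0.
  apply/eqP/setP => p. rewrite !inE. apply/negbTE/negP => /andP [pE pS].
  have [x [y [_ Hp]]] := edgeP pE. subst p.
  have : x \in (set0 : {set T}) by apply: (subsetP pS); rewrite !inE eqxx.
  by rewrite inE.
Qed.

Lemma ES_small n : forall S : {set T}, #|S| = n -> (#|ES S|).*2 <= n * (n - 1).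
Proof.
  elim: n => [|n IH] S HS.
  - by rewrite ES_empty.
  - have : 0 < #|S| by rewrite HS.
    case/card_gt0P => v vS.
    have HS' : #|S :\ v| = n by move: (cardsD1 v S); rewrite vS HS add1n => -[].
    have H1 := IH _ HS'.
    have H2 := ES_del S v.
    have H3 : #|NS S v| <= n by rewrite -HS'; apply: subset_leq_card; apply: NS_sub.
    rewrite -!muln2 in H1 *. nia.
Qed.

Lemma clique5 (S : {set T}) : #|S| = 5 -> (forall x y, x \in S -> y \in S -> x <> y -> e x y) -> False.
Proof.
  move=> HS Hc. apply: (HK5 (s := enum S)).
  - by rewrite -cardE.
  - exact: enum_uniq.
  - move=> x y; rewrite !mem_enum; exact: Hc.
Qed.

Lemma ES_five (S : {set T}) : #|S| = 5 -> #|ES S| <= 9.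
Proof.
  move=> HS.
  case: (boolP [exists u, exists w, [&& u \in S, w \in S, u != w & ~~ e u w]]).
  - case/existsP => u /existsP [w /and4P [uS wS uw nuw]].
    have HS' : #|S :\ u| = 4 by move: (cardsD1 u S); rewrite uS HS add1n => -[].
    have H1 := ES_small HS'.
    have H2 := ES_del S u.
    have H3 : #|NS S u| <= 3.
    { have : NS S u \subset S :\ u :\ w.
      { apply/subsetP => y. rewrite !inE => /andP [yS Euy]. rewrite yS andbT.
        apply/andP; split.
        - apply/eqP => Hyw; subst y. by rewrite Euy in nuw.
        - rewrite eq_sym. exact: neq_of_e. }
      move/subset_leq_card. move: (cardsD1 w (S :\ u)). rewrite !inE wS andbT eq_sym uw HS'.
      lia. }
    lia.
  - rewrite negb_exists => /forallP Hall. exfalso. apply: (clique5 HS) => x y xS yS xy.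
    move: (Hall x); rewrite negb_exists => /forallP /(_ y).
    rewrite xS yS /=. have -> : (x != y) by apply/eqP.
    by rewrite /= negbK.
Qed.

Lemma two_nonadj (S : {set T}) w y1 y2 : #|S| = 5 -> w \in S -> y1 \in S -> y2 \in S ->
  y1 != y2 -> y1 != w -> y2 != w -> ~~ e w y1 -> ~~ e w y2 -> #|ES S| <= 8.
Proof.
  move=> HS wS y1S y2S n12 n1w n2w E1 E2.
  have HS' : #|S :\ w| = 4 by move: (cardsD1 w S); rewrite wS HS add1n => -[].
  have H1 := ES_small HS'.
  have H2 := ES_del S w.
  have H3 : #|NS S w| <= 2.
  { have : NS S w \subset S :\ w :\ y1 :\ y2.
    { apply/subsetP => y. rewrite !inE => /andP [yS Ewy]. rewrite yS andbT.
      apply/and3P; split.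
      - apply/eqP => Hy; subst y. by rewrite Ewy in E2.
      - apply/eqP => Hy; subst y. by rewrite Ewy in E1.
      - rewrite eq_sym. exact: neq_of_e. }
    move/subset_leq_card.
    move: (cardsD1 y2 (S :\ w :\ y1)) (cardsD1 y1 (S :\ w)).
    rewrite !inE y2S y1S HS' (eq_sym y2 y1) n12 n1w n2w /=. lia. }
  lia.
Qed.

End Comb.

Set Implicit Arguments. Unset Strict Implicit. Unset Printing Implicit Defensive.

Lemma card_sumb (U : finType) (A : {set U}) (P : pred U) :
  #|[set p in A | P p]| = \sum_(p in A) (P p : nat).
Proof.
  rewrite -sum1_card. rewrite (bigID P (mem A)) /=.
  rewrite [X in _ = _ + X]big1; last first.
  { move=> i. move/andP => [_ Hi]. by rewrite (negbTE Hi). }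
  rewrite addn0. apply: eq_big.
  - move=> i. by rewrite !inE.
  - move=> i. rewrite inE. move/andP => [_ Hi]. by rewrite Hi.
Qed.

Lemma uniq6 (T : eqType) (x1 x2 x3 x4 x5 x6 : T) :
  x1 != x2 -> x1 != x3 -> x1 != x4 -> x1 != x5 -> x1 != x6 ->
  x2 != x3 -> x2 != x4 -> x2 != x5 -> x2 != x6 ->
  x3 != x4 -> x3 != x5 -> x3 != x6 ->
  x4 != x5 -> x4 != x6 -> x5 != x6 -> uniq [:: x1; x2; x3; x4; x5; x6].
Proof.
  move=> H12 H13 H14 H15 H16 H23 H24 H25 H26 H34 H35 H36 H45 H46 H56.
  rewrite /= !inE (negbTE H12) (negbTE H13) (negbTE H14) (negbTE H15) (negbTE H16)
    (negbTE H23) (negbTE H24) (negbTE H25) (negbTE H26) (negbTE H34) (negbTE H35)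
    (negbTE H36) (negbTE H45) (negbTE H46) (negbTE H56). done.
Qed.

Section Comb2.
Variables (T : finType) (e : rel T).
Hypothesis Hsym : symmetric e.
Hypothesis Hirr : irreflexive e.
Hypothesis HS22 : ~ has_S22 e.
Hypothesis HK5 : forall s : seq T, size s = 5 -> uniq s ->
  (forall x y, x \in s -> y \in s -> x <> y -> e x y) -> False.

Local Notation ES := (ES e).
Local Notation NS := (NS e).
Local Notation neq_of_e := (neq_of_e Hirr).

Lemma S22' x y a b c d : e x y -> e x a -> e x b -> e y c -> e y d ->
  uniq [:: x; y; a; b; c; d] -> False.
Proof. exact: S22_of. Qed.

Lemma NS_e (S : {set T}) x y : y \in NS S x -> (y \in S) && e x y.
Proof. by rewrite inE. Qed.

Lemma deg5 (S : {set T}) x y : 4 < #|NS S x| -> y \in NS S x -> 2 < #|NS S y| -> False.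
Proof.
  move=> Hx yN Hy.
  move: (yN) => /NS_e /andP [yS Exy].
  have : 1 < #|NS S y :\ x| by move: (cardD1_ge (NS S y) x); lia.
  case/card_gt1P => c [d [cN dN cd]].
  move: cN dN; rewrite !inE => /and3P [cx cS Eyc] /and3P [dx dS Eyd].
  have : 1 < #|NS S x :\ y :\ c :\ d|.
  { move: (cardD1_ge (NS S x) y) (cardD1_ge (NS S x :\ y) c) (cardD1_ge (NS S x :\ y :\ c) d). lia. }
  case/card_gt1P => a [b [aN bN ab]].
  move: aN bN; rewrite !inE => /and5P [ad ac ay aS Exa] /and5P [bd bc b_y bS Exb].
  apply: (S22' Exy Exa Exb Eyc Eyd).
  apply: uniq6; first [done | (by apply: neq_of_e) | (by rewrite eq_sym) | (by rewrite eq_sym; apply: neq_of_e)].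
Qed.

Lemma closed4 (S : {set T}) x y z : #|NS S x| = 4 -> y \in NS S x -> 2 < #|NS S y| ->
  z \in NS S y -> z \notin x |: NS S x -> False.
Proof.
  move=> Hx yN Hy zN zC.
  move: (yN) => /NS_e /andP [yS Exy].
  move: (zN) => /NS_e /andP [zS Eyz].
  move: zC; rewrite !inE zS /= negb_or => /andP [zx Exz].
  have : 0 < #|NS S y :\ x :\ z|.
  { move: (cardD1_ge (NS S y) x) (cardD1_ge (NS S y :\ x) z). lia. }
  case/card_gt0P => w. rewrite !inE => /and4P [wz wx wS Eyw].
  have : 1 < #|NS S x :\ y :\ w|.
  { move: (cardD1_ge (NS S x) y) (cardD1_ge (NS S x :\ y) w). lia. }
  case/card_gt1P => a [b [aN bN ab]].
  move: aN bN; rewrite !inE => /and4P [aw ay aS Exa] /and4P [bw b_y bS Exb].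
  apply: (S22' Exy Exa Exb Eyz Eyw).
  have az : a != z by apply/eqP => H; subst; rewrite Exa in Exz.
  have bz : b != z by apply/eqP => H; subst; rewrite Exb in Exz.
  apply: uniq6; first [done | (by apply: neq_of_e) | (by rewrite eq_sym) | (by rewrite eq_sym; apply: neq_of_e)].
Qed.

Lemma n6 (S : {set T}) v a : #|S| = 6 -> v \in S -> a \in NS S v -> 9 <= #|ES (S :\ v)| -> False.
Proof.
  move=> HS vS aN HE.
  have HS' : #|(S :\ v)| = 5 by move: (cardsD1 v S); rewrite vS HS add1n => -[].
  move: (aN) => /NS_e /andP [aS Eva].
  have av : a != v by rewrite eq_sym; apply: neq_of_e.
  have aS' : a \in (S :\ v) by rewrite !inE av aS.
  have key : forall w y1 y2, w \in (S :\ v) -> y1 \in (S :\ v) -> y2 \in (S :\ v) ->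
      y1 != y2 -> y1 != w -> y2 != w -> ~~ e w y1 -> ~~ e w y2 -> False.
  { move=> w y1 y2 wS y1S y2S n12 n1w n2w E1 E2.
    have := two_nonadj Hsym Hirr HS' wS y1S y2S n12 n1w n2w E1 E2. by rewrite leqNgt HE. }
  have Ha : 2 < #|NS (S :\ v) a|.
  { have H4 : #|(S :\ v) :\ a| = 4 by move: (cardsD1 a (S :\ v)); rewrite aS' HS' add1n => -[].
    have := ES_small Hsym Hirr H4. have := ES_del Hsym (S :\ v) a. lia. }
  have : 0 < #|NS (S :\ v) a| by lia.
  case/card_gt0P => z zN.
  move: (zN) => /NS_e /andP [zS' Eaz].
  have za : z != a by rewrite eq_sym; apply: neq_of_e.
  have HR : #|(S :\ v) :\ a :\ z| = 3.
  { have zSa : z \in (S :\ v) :\ a by rewrite in_setD1 za zS'.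
    move: (cardsD1 a (S :\ v)) (cardsD1 z ((S :\ v) :\ a)). rewrite aS' zSa HS'.
    move=> H1 H2; clear -H1 H2; lia. }
  have : 2 < #|(S :\ v) :\ a :\ z| by rewrite HR.
  case/card_gt2P => t1 [t2 [t3 [[t1R t2R t3R] [n12 n23 n31]]]].
  have Rs : forall t, t \in (S :\ v) :\ a :\ z -> [/\ t != z, t != a, t != v & t \in (S :\ v)].
  { move=> t. rewrite !inE => /and4P [tz ta tv tS]. by rewrite tz ta tv tS. }
  have zv : z != v by move: zS'; rewrite in_setD1 => /andP [-> _].
  have build : forall t c d, t \in (S :\ v) :\ a :\ z -> c \in (S :\ v) :\ a :\ z -> d \in (S :\ v) :\ a :\ z ->
      t != c -> t != d -> c != d -> e a t -> e z c -> e z d -> False.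
  { move=> t c d tR cR dR tc td cd Eat Ezc Ezd.
    have [tz ta tv _] := Rs t tR. have [cz ca cv _] := Rs c cR. have [dz da dv _] := Rs d dR.
    apply: (S22' Eaz (_ : e a v) Eat Ezc Ezd); first by rewrite Hsym.
    apply: uniq6 => //; try by rewrite eq_sym. }
  have [t1z t1a _ t1S] := Rs t1 t1R.
  have [t2z t2a _ t2S] := Rs t2 t2R.
  have [t3z t3a _ t3S] := Rs t3 t3R.
  have nsym : forall x y, ~~ e x y -> ~~ e y x by move=> x y; rewrite Hsym.
  have n13 : t1 != t3 by rewrite eq_sym.
  have n21 : t2 != t1 by rewrite eq_sym.
  have n32 : t3 != t2 by rewrite eq_sym.
  case E1: (e z t1); case E2: (e z t2); case E3: (e z t3).
  - case A1: (e a t1). { exact: (build t1 t2 t3). }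
    case A2: (e a t2). { apply: (build t2 t1 t3) => //. }
    apply: (key a t1 t2) => //; try by rewrite A1. by rewrite A2.
  - case A3: (e a t3). { apply: (build t3 t1 t2) => //. }
    apply: (key t3 z a) => //; try by rewrite eq_sym. by rewrite Hsym E3. by rewrite Hsym A3.
  - case A2: (e a t2). { apply: (build t2 t1 t3) => //. }
    apply: (key t2 z a) => //; try by rewrite eq_sym. by rewrite Hsym E2. by rewrite Hsym A2.
  - apply: (key z t2 t3) => //. by rewrite E2. by rewrite E3.
  - case A1: (e a t1). { apply: (build t1 t2 t3) => //. }
    apply: (key t1 z a) => //; try by rewrite eq_sym. by rewrite Hsym E1. by rewrite Hsym A1.
  - apply: (key z t1 t3) => //. by rewrite E1. by rewrite E3.
  - apply: (key z t1 t2) => //. by rewrite E1. by rewrite E2.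
  - apply: (key z t1 t2) => //. by rewrite E1. by rewrite E2.
Qed.

End Comb2.

Set Implicit Arguments. Unset Strict Implicit. Unset Printing Implicit Defensive.

Section Comb3.
Variables (T : finType) (e : rel T).
Hypothesis Hsym : symmetric e.
Hypothesis Hirr : irreflexive e.
Hypothesis HS22 : ~ has_S22 e.
Hypothesis HK5 : forall s : seq T, size s = 5 -> uniq s ->
  (forall x y, x \in s -> y \in s -> x <> y -> e x y) -> False.

Local Notation ES := (ES e).
Local Notation NS := (NS e).

Lemma handshake (S : {set T}) : (#|ES S|).*2 <= \sum_(x in S) #|NS S x|.
Proof.
  have E1 : (#|ES S|).*2 = \sum_(p in ES S) \sum_(x in S) ((x \in p) : nat).
  { rewrite -muln2 -sum_nat_const. apply: eq_bigr => p.
    rewrite inE => /andP [pE pS].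
    rewrite -card_sumb.
    have [x [y [Exy Hp]]] := edgeP pE. subst p.
    have -> : [set z in S | z \in [set x; y]] = [set x; y].
    { apply/setP => z. rewrite in_set. case: (boolP (z \in [set x; y])) => H.
      - rewrite andbT. exact: (subsetP pS z H).
      - by rewrite andbF. }
    by rewrite cards2 (neq_of_e Hirr Exy). }
  rewrite E1 exchange_big /=. apply: leq_sum => x xS.
  rewrite -card_sumb. apply: (leq_trans _ (leq_imset_card (fun y => [set x; y]) (NS S x))).
  apply: subset_leq_card. apply/subsetP => p. rewrite !inE => /andP [/andP [pE pS] xp].
  have [a [b [Eab Hp]]] := edgeP pE. subst p.
  move: xp; rewrite !inE => /orP [/eqP Hx|/eqP Hx]; subst x.
  - apply/imsetP. exists b => //. rewrite inE Eab andbT. apply: (subsetP pS). by rewrite !inE eqxx orbT.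
  - apply/imsetP. exists a => //. rewrite inE Hsym Eab andbT. apply: (subsetP pS). by rewrite !inE eqxx.
    by rewrite setUC.
Qed.

Definition nE (S : {set T}) := #|ES S|.
Definition dg (S : {set T}) v := #|NS S v|.

Lemma main_bound n : forall S : {set T}, #|S| = n -> 0 < n -> 2 + nE S <= 2 * n + (n == 5).
Proof.
  elim/ltn_ind: n => n IH S HS Hn.
  case: (ltnP n 5) => Hn5.
  { have H : 2 * nE S <= n * (n - 1) by rewrite mul2n; exact: (ES_small Hsym Hirr HS).
    move: H Hn Hn5. clear. case: n => [//|[|[|[|[|]]]]] //= ; lia. }
  case: (eqVneq n 5) => [Hn5e|Hn5e].
  { rewrite Hn5e in HS *. have H : nE S <= 9 := ES_five Hsym Hirr HK5 HS. move: H. clear. simpl. lia. }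
  have Hn6 : 6 <= n by move: Hn5 Hn5e; clear; lia.
  rewrite addn0.
  case: (boolP [exists v in S, #|NS S v| <= 2]).
  { case/existsP => v /andP [vS Hv].
    have Hv' : dg S v <= 2 := Hv.
    have HS' : #|S :\ v| = n.-1 by move: (cardsD1 v S); rewrite vS HS add1n => ->.
    have IH' : 2 + nE (S :\ v) <= 2 * n.-1 + (n.-1 == 5) :=
      IH n.-1 ltac:(clear -Hn6; lia) (S :\ v) HS' ltac:(clear -Hn6; lia).
    have Hdel : nE S <= nE (S :\ v) + dg S v := ES_del Hsym S v.
    case: (eqVneq n 6) => [Hn6e|Hn6e].
    - rewrite Hn6e in HS IH' *. move: IH' => /= IH'.
      case: (leqP 9 (nE (S :\ v))) => H9.
      + case: (leqP 1 (dg S v)) => H1.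
        * exfalso. move: H1 => /card_gt0P [a aN]. exact: (n6 Hsym Hirr HS22 HS vS aN H9).
        * clear -Hdel H1 IH'. lia.
      + clear -Hdel H9 Hv'. lia.
    - have Hf : (n.-1 == 5) = false by apply/eqP; move: Hn6e; clear; lia.
      rewrite Hf addn0 in IH'. clear -IH' Hdel Hv' Hn6. lia. }
  rewrite negb_exists => /forallP Hall.
  have Hge3 : forall x, x \in S -> 2 < #|NS S x|.
  { move=> x xS. move: (Hall x). by rewrite xS /= -ltnNge. }
  have Hle4 : forall x, x \in S -> #|NS S x| <= 4.
  { move=> x xS. rewrite leqNgt. apply/negP => H5.
    have : 0 < #|NS S x| by move: H5; clear; lia.
    case/card_gt0P => y yN.
    have yS : y \in S by move: yN; rewrite inE => /andP [].
    exact: (deg5 Hirr HS22 H5 yN (Hge3 y yS)). }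
  case: (boolP [exists x in S, #|NS S x| == 4]).
  { case/existsP => x /andP [xS /eqP Hx4].
    set C := x |: NS S x.
    have xN : x \notin NS S x by rewrite inE negb_and Hirr orbT.
    have HC : #|C| = 5 by rewrite /C cardsU1 xN Hx4.
    have CS : C \subset S.
    { apply/subsetP => z. rewrite !inE => /orP [/eqP ->|/andP [] //]. exact: xS. }
    have Hcl : forall c z, c \in C -> z \in S -> e c z -> z \in C.
    { move=> c z cC zS Ecz. case/setU1P: (cC) => [Hc|cN].
      - subst c. by rewrite /C !inE zS Ecz orbT.
      - apply/negPn/negP => zC.
        have zN : z \in NS S c by rewrite inE zS Ecz.
        have cS : c \in S by move: cN; rewrite inE => /andP [].
        exact: (closed4 Hirr HS22 Hx4 cN (Hge3 c cS) zN zC). }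
    have Hsplit : ES S \subset ES C :|: ES (S :\: C).
    { apply/subsetP => p. rewrite !inE => /andP [pE pS].
      have [a [b [Eab Hp]]] := edgeP pE. subst p.
      have aS : a \in S by apply: (subsetP pS); rewrite !inE eqxx.
      have bS : b \in S by apply: (subsetP pS); rewrite !inE eqxx orbT.
      rewrite pE /=.
      case: (boolP (a \in C)) => aC.
      - apply/orP; left. apply/subsetP => z. rewrite in_set2 => /orP [/eqP ->|/eqP ->] //.
        exact: (Hcl a b aC bS Eab).
      - have bC : b \notin C.
        { apply/negP => bC. move: aC => /negP; apply. apply: (Hcl b a bC aS). by rewrite Hsym. }
        apply/orP; right. apply/subsetP => z. rewrite in_set2 => /orP [/eqP ->|/eqP ->].
        + by rewrite in_setD aS aC.
        + by rewrite in_setD bS bC. }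
    have HR : #|S :\: C| = n - 5.
    { move: (cardsD S C). rewrite (setIidPr CS) HC HS. by []. }
    have IHR : 2 + nE (S :\: C) <= 2 * (n - 5) + (n - 5 == 5) :=
      IH (n - 5) ltac:(clear -Hn6; lia) (S :\: C) HR ltac:(clear -Hn6; lia).
    have H9 : nE C <= 9 := ES_five Hsym Hirr HK5 HC.
    have Hs : nE S <= #|ES C :|: ES (S :\: C)| := subset_leq_card Hsplit.
    have U : #|ES C :|: ES (S :\: C)| <= nE C + nE (S :\: C) := leq_card_setU (ES C) (ES (S :\: C)).
    move: IHR H9 U Hs Hn6. clear. case: (n - 5 == 5); lia. }
  rewrite negb_exists => /forallP Hn4.
  have H3 : forall x, x \in S -> #|NS S x| = 3.
  { move=> x xS. have := Hge3 x xS. have := Hle4 x xS. move: (Hn4 x). rewrite xS /=.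
    move=> /negP H1 H2 H3. apply/eqP. move: H1 H2 H3. clear. case: (#|NS S x|) => [|[|[|[|[|k]]]]] //. }
  have Hh := handshake S.
  rewrite (eq_bigr (fun _ => 3)) // sum_nat_const HS -muln2 in Hh.
  have Hh' : nE S * 2 <= n * 3 := Hh.
  move: Hh' Hn6. clear. lia.
Qed.

End Comb3.

Theorem comb_main (T : finType) (e : rel T) :
  simple_graph e ->
  (forall s : seq T, size s = 5 -> uniq s ->
    (forall x y, x \in s -> y \in s -> x <> y -> e x y) -> False) ->
  1 <= #|T| -> #|T| != 5 ->
  ~ has_S22 e ->
  num_edges e <= 2 * #|T| - 2.
Proof.
  move=> [Hsym Hirr] HK5 H1 H5 HS22.
  have H := main_bound Hsym Hirr HS22 HK5 (S := [set: T]) (cardsT T) H1.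
  have E : ES e [set: T] = edge_set e.
  { apply/setP => p. by rewrite !inE subsetT andbT. }
  rewrite /nE E (negbTE H5) addn0 in H.
  have H' : 2 + num_edges e <= 2 * #|T| := H.
  move: H' H1. clear. lia.
Qed.


Theorem lemma2p1 (T : finType) (e : rel T) :
  simple_graph e ->
  1 <= #|T| -> #|T| != 5 ->
  planar e ->
  ~ has_S22 e ->
  num_edges e <= 2 * #|T| - 2.
Proof.
  move=> Hs H1 H5 Hp HS22.
  apply: (comb_main Hs _ H1 H5 HS22).
  move=> s Hsz Hu Hadj. exact: (@no_K5 T e s Hp Hsz Hu Hadj).
Qed.
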